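(* Let $A,B\subseteq\mathbb{R}^n$ be finite (Euclidean metric), $\beta>0$ and $\delta>d_P(A,B)$. For all $r>0$ and $k>\delta$, $$\mathrm{DCr}^\beta_{r,k}(A)\subseteq\mathrm{DCr}^\beta_{r',k-\delta}(B)\quad\text{and}\quad\mathrm{DCr}^\beta_{r,k}(B)\subseteq\mathrm{DCr}^\beta_{r',k-\delta}(A),$$ where $r'=\max\{1,2\beta\}\big((1+\beta^{-1})r+\delta\big)$.
   Context: $d$ Euclidean, $\bar B_d(x,r)=\{y:d(x,y)\le r\}$. For finite $A$, $k>0$, $x\in\mathbb{R}^n$, $\mathrm{core}^A_k(x)$ is the distance from $x$ to its $\lceil k\rceil$-th nearest neighbor in $A$ (each point of $A$ counted once, $x$ itself counting if $x\in A$); equivalently $\min\{r\ge0:|\bar B_d(x,r)\cap A|\ge k\}$, and $\infty$ if $k>|A|$. For $\beta>0$: $\Lambda^\beta_k(a,x)=\max\{\beta\,\mathrm{core}^A_k(a),d(a,x)\}$, $B^\beta_{r,k}(a)=\{x:\Lambda^\beta_k(a,x)\le r\}$, $\mathrm{Vor}_A(a)=\{x:d(a,x)\le d(a',x)\ \forall a'\in A\}$, and $\mathrm{DCr}^\beta_{r,k}(A)=\bigcup_{a\in A}\big(B^\beta_{r,k}(a)\cap\mathrm{Vor}_A(a)\big)$ (similarly for $B$). For $S\subseteq\mathbb{R}^n$, $\delta\ge0$: $S^\delta=\bigcup_{s\in S}\bar B_d(s,\delta)$. Counting Prohorov distance: $d_P(A,B)=\sup_{S\text{ closed}}\inf\{\delta\ge0:|S\cap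 A|\le|S^\delta\cap B|+\delta\text{ and }|S\cap B|\le|S^\delta\cap A|+\delta\}$. *)

(* Defs.v *)
From HB Require Import structures.
From mathcomp Require Import all_boot all_order all_algebra.
From mathcomp Require Import all_classical all_reals constructive_ereal ereal topology normedtype.
Set Implicit Arguments. Unset Strict Implicit. Unset Printing Implicit Defensive.
Import Order.TTheory GRing.Theory Num.Theory.
Local Open Scope classical_set_scope.
Local Open Scope ring_scope.

Section Defs.
Variables (R : realType) (n : nat).
Notation pt := 'rV[R]_n.

Definition edist (x y : pt) : R :=
  Num.sqrt (\sum_(i < n) (x ord0 i - y ord0 i) ^+ 2).

Definition cball (x : pt) (r : R) : set pt := [set y | edist x y <= r].

(* number of points of the finite set A (a duplicate-free list) lying in S *)
Definition cnt (S : set pt) (A : seq pt) : nat := count (fun a => `[< S a >]) A.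

Definition core (A : seq pt) (k : R) (x : pt) : \bar R :=
  ereal_inf [set r%:E | r in [set r : R | 0 <= r /\ k <= (cnt (cball x r) A)%:R]].

Definition Lambda (A : seq pt) (beta k : R) (a x : pt) : \bar R :=
  Order.max (beta%:E * core A k a)%E (edist a x)%:E.

Definition Bball (A : seq pt) (beta r k : R) (a : pt) : set pt :=
  [set x | (Lambda A beta k a x <= r%:E)%E].

Definition Vor (A : seq pt) (a : pt) : set pt :=
  [set x | forall a', a' \in A -> edist a x <= edist a' x].

Definition DCr (A : seq pt) (beta r k : R) : set pt :=
  [set x | exists2 a, a \in A & (Bball A beta r k a `&` Vor A a) x].

Definition eclosed (S : set pt) : Prop :=
  forall x, (forall e : R, 0 < e -> exists2 s, S s & edist x s < e) -> S x.

Definition thicken (S : set pt) (d : R) : set pt :=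
  \bigcup_(s in S) cball s d.

Definition prohorov_cond (A B : seq pt) (S : set pt) (d : R) : Prop :=
  0 <= d /\
  (cnt S A)%:R <= (cnt (thicken S d) B)%:R + d /\
  (cnt S B)%:R <= (cnt (thicken S d) A)%:R + d.

Definition dP (A B : seq pt) : \bar R :=
  ereal_sup [set ereal_inf [set d%:E | d in prohorov_cond A B S]
            | S in [set S : set pt | eclosed S]].

End Defs.

(* Main.v *)
Require Import Defs.
From HB Require Import structures.
From mathcomp Require Import all_boot all_order all_algebra.
From mathcomp Require Import all_classical all_reals constructive_ereal ereal topology normedtype.
From mathcomp Require Import ring lra.
Import Order.TTheory GRing.Theory Num.Theory.
Local Open Scope classical_set_scope.
Local Open Scope ring_scope.
Set Implicit Arguments. Unset Strict Implicit.

Section CS.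
Variables (R : realType) (n : nat).
Implicit Types (u v : 'I_n -> R).

Lemma cs_sq u v : (\sum_i u i * v i) ^+ 2 <= (\sum_i u i ^+ 2) * (\sum_i v i ^+ 2).
Proof.
have H : 0 <= \sum_i \sum_j (u i * v j - u j * v i) ^+ 2.
  by apply: sumr_ge0 => i _; apply: sumr_ge0 => j _; exact: sqr_ge0.
have E : forall i, \sum_j (u i * v j - u j * v i) ^+ 2 =
   u i ^+ 2 * (\sum_j v j ^+ 2) + v i ^+ 2 * (\sum_j u j ^+ 2)
   - 2 * (u i * v i) * (\sum_j u j * v j).
  move=> i; rewrite !mulr_sumr -big_split -sumrB /=; apply: eq_bigr => j _.
  by ring.
rewrite (eq_bigr _ (fun i _ => E i)) sumrB big_split /= -!mulr_suml in H.
rewrite -mulr_sumr in H.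
move: H; set a := \sum_(i < n) u i ^+ 2; set b := \sum_(i < n) v i ^+ 2;
  set c := \sum_(i < n) u i * v i => H.
rewrite expr2; nra.
Qed.

Lemma sum_le_sqrt u v : \sum_i u i * v i <= Num.sqrt (\sum_i u i ^+ 2) * Num.sqrt (\sum_i v i ^+ 2).
Proof.
have a0 : 0 <= \sum_i u i ^+ 2 by apply: sumr_ge0 => i _; exact: sqr_ge0.
rewrite -sqrtrM //; apply: (le_trans (ler_norm _)).
by rewrite -sqrtr_sqr ler_wsqrtr // cs_sq.
Qed.

Lemma minkowski u v : Num.sqrt (\sum_i (u i + v i) ^+ 2) <=
  Num.sqrt (\sum_i u i ^+ 2) + Num.sqrt (\sum_i v i ^+ 2).
Proof.
have a0 : 0 <= \sum_i u i ^+ 2 by apply: sumr_ge0 => i _; exact: sqr_ge0.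
have b0 : 0 <= \sum_i v i ^+ 2 by apply: sumr_ge0 => i _; exact: sqr_ge0.
have E : \sum_i (u i + v i) ^+ 2 = \sum_i u i ^+ 2 + \sum_i v i ^+ 2 + 2 * \sum_i u i * v i.
  rewrite mulr_sumr -!big_split /=; apply: eq_bigr => i _; ring.
have H := sum_le_sqrt u v.
have sa := sqr_sqrtr a0; have sb := sqr_sqrtr b0.
have sa0 := sqrtr_ge0 (\sum_i u i ^+ 2); have sb0 := sqrtr_ge0 (\sum_i v i ^+ 2).
rewrite -[X in _ <= X]ger0_norm ?addr_ge0 // -sqrtr_sqr ler_wsqrtr // E.
move: H sa sb sa0 sb0; set a := \sum_i u i ^+ 2; set b := \sum_i v i ^+ 2;
  set c := \sum_i u i * v i; set sa := Num.sqrt a; set sb := Num.sqrt b.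
move=> H sa2 sb2 ? ?; rewrite expr2; nra.
Qed.
End CS.

Section Geo.
Variables (R : realType) (n : nat).
Implicit Types (x y z : 'rV[R]_n).

Lemma edist_sym x y : Defs.edist x y = Defs.edist y x.
Proof. by rewrite /Defs.edist; congr Num.sqrt; apply: eq_bigr => i _; ring. Qed.

Lemma edist_tri x y z : Defs.edist x z <= Defs.edist x y + Defs.edist y z.
Proof.
rewrite /Defs.edist.
have := @minkowski _ _ (fun i => x ord0 i - y ord0 i) (fun i => y ord0 i - z ord0 i).
congr (Num.sqrt _ <= _); apply: eq_bigr => i _; congr (_ ^+ 2); ring.
Qed.

Lemma edist_ge0 x y : 0 <= Defs.edist x y.
Proof. exact: sqrtr_ge0. Qed.
End Geo.


Section Main.
Variables (R : realType) (n : nat).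
Notation pt := 'rV[R]_n.
Implicit Types (A B : seq pt) (S T : set pt).

Lemma cnt_sub S T A : S `<=` T -> (cnt S A <= cnt T A)%N.
Proof. by move=> ST; apply: sub_count => x /asboolP Sx; apply/asboolP; exact: ST. Qed.

Lemma cnt_pos S A : (0 < cnt S A)%N -> exists2 b, b \in A & S b.
Proof. by rewrite /cnt -has_count => /hasP [b bA /asboolP Sb]; exists b. Qed.

Lemma eclosed_cball (a : pt) rho : eclosed (cball a rho).
Proof.
move=> x H; rewrite /cball /=; apply/ler_addgt0Pr => e e0.
have [s Ss hs] := H e e0.
apply: (le_trans (edist_tri a s x)); apply: lerD => //.
by rewrite edist_sym ltW.
Qed.

Lemma eclosed_set0 : eclosed (@set0 pt).
Proof. by move=> x H; have [s []] := H 1 ltr01. Qed.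

Lemma thicken_sub (a : pt) rho d : thicken (cball a rho) d `<=` cball a (rho + d).
Proof.
move=> x [s Ss Sx]; rewrite /cball /=.
by apply: (le_trans (edist_tri a s x)); apply: lerD.
Qed.

Arguments eclosed_cball : clear implicits.
Arguments thicken_sub : clear implicits.
Definition Hc A B (delta : R) := forall S, eclosed S ->
  exists2 d, d < delta & 0 <= d /\ (cnt S A)%:R <= (cnt (thicken S d) B)%:R + d.

Lemma HP A B delta : (dP A B < delta%:E)%E -> Hc A B delta /\ Hc B A delta.
Proof.
move=> hd.
suff H : forall S, eclosed S -> exists2 d, d < delta & prohorov_cond A B S d.
  split=> S cS; have [d dlt [d0 [h1 h2]]] := H S cS; exists d => //.
have H S : eclosed S -> exists2 d, d < delta & prohorov_cond A B S d.
  move=> cS.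
  have : (ereal_inf [set d%:E | d in prohorov_cond A B S] <= dP A B)%E.
    by apply: ereal_sup_ubound; exists S.
  move=> /le_lt_trans /(_ hd) /ereal_inf_lt [_ [d dc <-]].
  by rewrite lte_fin => dlt; exists d.
exact: H.
Qed.

Lemma delta_pos A B delta : Hc A B delta -> 0 < delta.
Proof. by move=> H; have [d dlt [d0 _]] := H _ eclosed_set0; exact: le_lt_trans dlt. Qed.

Lemma core_lt A k (a : pt) c : (core A k a < c%:E)%E ->
  exists rho, [/\ 0 <= rho, k <= (cnt (cball a rho) A)%:R & rho < c].
Proof.
by move=> /ereal_inf_lt [_ [rho [r0 rk] <-]]; rewrite lte_fin => rc; exists rho.
Qed.

Lemma core_le A k (b : pt) t : 0 <= t -> k <= (cnt (cball b t) A)%:R ->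
  (core A k b <= t%:E)%E.
Proof. by move=> t0 tk; apply: ereal_inf_lbound; exists t. Qed.

Lemma nearest B (x : pt) : B != [::] ->
  exists2 b, b \in B & forall b', b' \in B -> Defs.edist b x <= Defs.edist b' x.
Proof.
elim: B => [//|c B IH] _.
case: (eqVneq B [::]) => [->|BN].
  by exists c; rewrite ?mem_head // => b'; rewrite inE => /eqP ->.
have [b bB hb] := IH BN.
have [cb|bc] := leP (Defs.edist c x) (Defs.edist b x).
  exists c; first exact: mem_head.
  move=> b'; rewrite inE => /orP [/eqP ->//|/hb]; exact: le_trans.
exists b; first by rewrite inE bB orbT.
move=> b'; rewrite inE => /orP [/eqP ->|/hb //]; exact: ltW.
Qed.


Lemma step A B delta k (a : pt) rho : Hc A B delta -> 0 <= rho ->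
  k <= (cnt (cball a rho) A)%:R -> delta < k ->
  k - delta <= (cnt (cball a (rho + delta)) B)%:R /\
  exists2 b, b \in B & Defs.edist a b <= rho + delta.
Proof.
move=> H r0 rk dk.
have [d dlt [d0 hd]] := H _ (eclosed_cball a rho).
have c1 : k - delta <= (cnt (cball a (rho + delta)) B)%:R.
  have : (cnt (thicken (cball a rho) d) B <= cnt (cball a (rho + delta)) B)%N.
    apply: cnt_sub; apply: (subset_trans (thicken_sub a rho d)).
    by move=> y; rewrite /cball /= => h; apply: (le_trans h); rewrite lerD2l ltW.
  rewrite -(ler_nat R) => h; lra.
split => //.
have : (0 < cnt (cball a (rho + delta)) B)%N.
  by rewrite -(ltr_nat R); apply: lt_le_trans c1; rewrite subr_gt0.
by move/cnt_pos => [b bB hb]; exists b.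
Qed.

Lemma dir A B delta beta r k : 0 < beta -> 0 < r -> delta < k -> Hc A B delta ->
  DCr A beta r k `<=`
  DCr B beta (Num.max 1 (2 * beta) * ((1 + beta^-1) * r + delta)) (k - delta).
Proof.
move=> b0 r0 dk H x [a aA [HB HV]].
have d0 := delta_pos H.
move: HB; rewrite /Bball /Lambda /= ge_max => /andP [Hc1]; rewrite lee_fin => hax.
have Hcore : (core A k a <= (r / beta)%:E)%E.
  rewrite -(@lee_pmul2l _ beta%:E) // ?lte_fin // -EFinM mulrC divfK ?gt_eqF //.
have Hst : forall e, 0 < e -> exists rho, [/\ 0 <= rho, rho < r / beta + e,
    k - delta <= (cnt (cball a (rho + delta)) B)%:R &
    exists2 b, b \in B & Defs.edist a b <= rho + delta].
  move=> e e0.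
  have : (core A k a < (r / beta + e)%:E)%E.
    by apply: (le_lt_trans Hcore); rewrite lte_fin ltrDl.
  move=> /core_lt [rho [r0' rk rlt]]; exists rho.
  by have [h1 h2] := step H r0' rk dk; split.
have [rho1 [_ _ _ [b1 b1B _]]] := Hst 1 ltr01.
have BN : B != [::] by apply/eqP => BE; rewrite BE in b1B.
have [b bB hb] := nearest x BN.
set Q := (1 + beta^-1) * r + delta.
have QE : Q = r + r / beta + delta by rewrite /Q mulrDl mul1r mulrC.
have Db : Defs.edist b x <= Q.
  rewrite QE; apply/ler_addgt0Pr => e e0.
  have [rho [_ rlt _ [be beB hbe]]] := Hst e e0.
  apply: (le_trans (hb _ beB)); apply: (le_trans (edist_tri be a x)).
  rewrite (edist_sym be a); lra.
have Dc : (core B (k - delta) b <= (2 * Q)%:E)%E.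
  apply/lee_addgt0Pr => e e0.
  have [rho [rho0 rlt cnt1 _]] := Hst e e0.
  have Dba : Defs.edist b a <= Q + r.
    apply: (le_trans (edist_tri b x a)); rewrite (edist_sym x a); lra.
  apply: (@le_trans _ _ (Defs.edist b a + rho + delta)%:E).
    apply: core_le; first by have := edist_ge0 b a; lra.
    apply: (le_trans cnt1); rewrite ler_nat; apply: cnt_sub => y; rewrite /cball /= => hy.
    by apply: (le_trans (edist_tri b a y)); rewrite -addrA lerD2l.
  rewrite lee_fin; move: QE; lra.
have Q0 : 0 <= Q by have := edist_ge0 b x; lra.
exists b => //; split; last by move=> b' /hb.
rewrite /Bball /Lambda /= ge_max; apply/andP; split.
  apply: (le_trans (lee_wpmul2l _ Dc)); first by rewrite lee_fin ltW.
  by rewrite -EFinM lee_fin mulrA ler_wpM2r // [beta * 2]mulrC le_max lexx orbT.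
rewrite lee_fin; apply: (le_trans Db).
by rewrite -{1}(mul1r Q) ler_wpM2r // le_max lexx.
Qed.

End Main.

Unset Implicit Arguments. Set Strict Implicit.

Theorem mainTheorem8 (R : realType) (n : nat) (A B : seq 'rV[R]_n)
  (uA : uniq A) (uB : uniq B) (beta delta : R) (hbeta : 0 < beta)
  (hdelta : (dP A B < delta%:E)%E) :
  forall r k : R, 0 < r -> delta < k ->
  let r' := Num.max 1 (2 * beta) * ((1 + beta^-1) * r + delta) in
  DCr A beta r k `<=` DCr B beta r' (k - delta) /\
  DCr B beta r k `<=` DCr A beta r' (k - delta).
Proof.
move=> r k r0 dk r'; have [H1 H2] := HP hdelta.
by split; apply: dir.
Qed.
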